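(* Let $H$ be a separable complex Hilbert space, $(\Omega,\mu)$ a measure space with positive measure, let $K\in B(H)$ have closed range, let $F:\Omega\to H$ be a Parseval continuous $K$-frame of $H$, and let $\tilde F(\omega)=K^{\dagger}F(\omega)$ be its canonical dual continuous $K$-Bessel sequence. Then: (1) $F$ is continuous $L^2$-independent if and only if $\tilde F$ is continuous $L^2$-independent; (2) if $F$ admits a unique dual continuous $K$-Bessel sequence, then $\tilde F$ admits a unique dual continuous $K^{\ast}$-Bessel sequence.
   Context: A map $F:\Omega\to H$ is weakly measurable if $\omega\mapsto\langle f,F(\omega)\rangle$ is measurable for every $f\in H$. A continuous Bessel sequence is a weakly measurable $G$ with $\int_\Omega|\langle f,G(\omega)\rangle|^2\,d\mu(\omega)\le B\|f\|^2$ for all $f\in H$, for some $B>0$. A Parseval continuous $K$-frame is a weakly measurable $F$ with $\int_\Omega|\langle f,F(\omega)\rangle|^2\,d\mu(\omega)=\|K^{\ast}f\|^2$ for all $f\in H$. For $L\in B(H)$ and a map $E:\Omega\to H$, a dual continuous $L$-Bessel sequence of $E$ is a continuous Bessel sequence $G$ with $Lf=\int_\Omega\langle f,G(\omega)\rangle E(\omega)\,d\mu(\omega)$ for all $f\in H$. A continuous Bessel mapping $E$ is (continuous) $L^2$-independent if $\int_\Omega\phi(\omega)E(\omega)\,d\mu(\omega)=0$ with $\phi\in L^2(\Omega,\mu)$ implies $\phi=0$ a.e. $K^{\dagger}$ is the Moore–Penrose pseudo-inverse of $K$; the canonical dual continuous $K$-Bessel sequence of $F$ is $K^{\dagger}F$.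 *)

(* Defs.v *)
From HB Require Import structures.
From mathcomp Require Import all_boot all_order all_algebra.
From mathcomp Require Import all_classical all_reals all_analysis.
From mathcomp Require Import complex.
Set Implicit Arguments.
Unset Strict Implicit.
Unset Printing Implicit Defensive.
Import Order.TTheory GRing.Theory Num.Theory.
Local Open Scope classical_set_scope.
Local Open Scope ring_scope.

(* Complex Hilbert spaces, given concretely by an inner product on a   *)
(* left module over C = R[i].  Convention: <x, y> is linear in x and  *)
(* conjugate-linear in y.                                             *)
Section Hilbert.
Variables (R : realType) (H : lmodType R[i]) (ip : H -> H -> R[i]).

Definition is_inner_product : Prop :=
  [/\ (forall (a : R[i]) (x y z : H), ip (a *: x + y) z = a * ip x z + ip y z),
      (forall x y : H, ip y x = conjc (ip x y)),
      (forall x : H, complex.Im (ip x x) = 0 /\ 0 <= complex.Re (ip x x)) &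
      (forall x : H, ip x x = 0 -> x = 0)].

Definition hnorm (x : H) : R := Num.sqrt (complex.Re (ip x x)).

Definition hconverges (u : nat -> H) (l : H) : Prop :=
  forall e : R, 0 < e -> exists N : nat, forall n, (N <= n)%N -> hnorm (u n - l) < e.

Definition hcauchy (u : nat -> H) : Prop :=
  forall e : R, 0 < e -> exists N : nat,
    forall m n, (N <= m)%N -> (N <= n)%N -> hnorm (u m - u n) < e.

Definition hcomplete : Prop :=
  forall u : nat -> H, hcauchy u -> exists l, hconverges u l.

Definition hseparable : Prop :=
  exists d : nat -> H, forall (x : H) (e : R), 0 < e -> exists n, hnorm (x - d n) < e.

Definition separable_hilbert_space : Prop :=
  [/\ is_inner_product, hcomplete & hseparable].

Definition bounded_op (A : H -> H) : Prop :=
  (forall (a : R[i]) (x y : H), A (a *: x + y) = a *: A x + A y) /\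
  (exists M : R, forall x, hnorm (A x) <= M * hnorm x).

Definition is_adjoint (A As : H -> H) : Prop :=
  forall x y : H, ip (A x) y = ip x (As y).

Definition closed_range (A : H -> H) : Prop :=
  forall (u : nat -> H) (y : H), hconverges (fun n => A (u n)) y ->
    exists x, A x = y.

Definition selfadjoint (A : H -> H) : Prop := is_adjoint A A.

Definition is_MP_inverse (A Ad : H -> H) : Prop :=
  [/\ bounded_op Ad,
      (forall x, A (Ad (A x)) = A x),
      (forall x, Ad (A (Ad x)) = Ad x),
      selfadjoint (A \o Ad) &
      selfadjoint (Ad \o A)].
End Hilbert.

Section Cmeasure.
Context {d : measure_display} {T : measurableType d} {R : realType}.
Variable mu : {measure set T -> \bar R}.

Definition cmeasurable (g : T -> R[i]) : Prop :=
  measurable_fun setT (fun w => complex.Re (g w)) /\ measurable_fun setT (fun w => complex.Im (g w)).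

Definition cintegral (g : T -> R[i]) : R[i] :=
  Complex (Rintegral mu setT (fun w => complex.Re (g w)))
          (Rintegral mu setT (fun w => complex.Im (g w))).

Definition csq_integral (g : T -> R[i]) : \bar R :=
  (\int[mu]_w (complex.Re (g w) ^+ 2 + complex.Im (g w) ^+ 2)%:E)%E.

Definition L2c (g : T -> R[i]) : Prop :=
  cmeasurable g /\ (csq_integral g < +oo)%E.

Variables (H : lmodType R[i]) (ip : H -> H -> R[i]).

Definition weakly_measurable (E : T -> H) : Prop :=
  forall f : H, cmeasurable (fun w => ip f (E w)).

Definition cont_bessel (G : T -> H) : Prop :=
  weakly_measurable G /\
  exists B : R, 0 < B /\
    forall f : H, (csq_integral (fun w => ip f (G w)) <= (B * hnorm ip f ^+ 2)%:E)%E.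

(* F is a Parseval continuous K-frame, Ks being the adjoint K^* *)
Definition parseval_cont_Kframe (Ks : H -> H) (F : T -> H) : Prop :=
  weakly_measurable F /\
  forall f : H, csq_integral (fun w => ip f (F w)) = ((hnorm ip (Ks f)) ^+ 2)%:E.

(* G is a dual continuous L-Bessel sequence of E:
   L f = \int <f, G w> E w dmu (weakly), i.e.
   <L f, h> = \int <f, G w> <E w, h> dmu for all h *)
Definition dual_cont_bessel (L : H -> H) (E G : T -> H) : Prop :=
  cont_bessel G /\
  forall f h : H, ip (L f) h = cintegral (fun w => ip f (G w) * ip (E w) h).

Definition unique_dual_cont_bessel (L : H -> H) (E : T -> H) : Prop :=
  (exists G, dual_cont_bessel L E G) /\
  forall G1 G2, dual_cont_bessel L E G1 -> dual_cont_bessel L E G2 ->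
    {ae mu, forall w, G1 w = G2 w}.

Definition cont_L2_independent (E : T -> H) : Prop :=
  forall phi : T -> R[i], L2c phi ->
    (forall h : H, cintegral (fun w => phi w * ip (E w) h) = 0) ->
    {ae mu, forall w, phi w = 0}.
End Cmeasure.

(* Main.v *)
Require Import Defs.
From HB Require Import structures.
From mathcomp Require Import all_boot all_order all_algebra.
From mathcomp Require Import all_classical all_reals all_analysis.
From mathcomp Require Import complex.
From mathcomp Require Import ring lra.
From mathcomp Require Import measurable_realfun.
Import Order.TTheory GRing.Theory Num.Theory.
Local Open Scope classical_set_scope.
Local Open Scope ring_scope.
Local Open Scope complex_scope.
Set Implicit Arguments.
Unset Strict Implicit.
Unset Printing Implicit Defensive.

Section CplxFacts.
Variable R : realType.
Local Notation Re := complex.Re.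
Local Notation Im := complex.Im.
Lemma cReM (x y : R[i]) : Re (x * y) = Re x * Re y - Im x * Im y.
Proof. by case: x y => a b [c d]. Qed.
Lemma cImM (x y : R[i]) : Im (x * y) = Re x * Im y + Im x * Re y.
Proof. by case: x y => a b [c d]. Qed.
Lemma cReD (x y : R[i]) : Re (x + y) = Re x + Re y.
Proof. by case: x y => a b [c d]. Qed.
Lemma cImD (x y : R[i]) : Im (x + y) = Im x + Im y.
Proof. by case: x y => a b [c d]. Qed.
Lemma cReN (x : R[i]) : Re (- x) = - Re x.
Proof. by case: x. Qed.
Lemma cImN (x : R[i]) : Im (- x) = - Im x.
Proof. by case: x. Qed.
Lemma cReB (x y : R[i]) : Re (x - y) = Re x - Re y.
Proof. by rewrite cReD cReN. Qed.
Lemma cImB (x y : R[i]) : Im (x - y) = Im x - Im y.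
Proof. by rewrite cImD cImN. Qed.
Lemma cReJ (x : R[i]) : Re (conjc x) = Re x.
Proof. by case: x. Qed.
Lemma cImJ (x : R[i]) : Im (conjc x) = - Im x.
Proof. by case: x. Qed.
Lemma cReC (r : R) : Re (r%:C) = r. Proof. by []. Qed.
Lemma cImC (r : R) : Im (r%:C) = 0. Proof. by []. Qed.
Lemma cRe0 : Re (0 : R[i]) = 0. Proof. by []. Qed.
Lemma cIm0 : Im (0 : R[i]) = 0. Proof. by []. Qed.
Lemma cRe1 : Re (1 : R[i]) = 1. Proof. by []. Qed.
Lemma cIm1 : Im (1 : R[i]) = 0. Proof. by []. Qed.
Lemma cRei : Re ('i%C : R[i]) = 0. Proof. by []. Qed.
Lemma cImi : Im ('i%C : R[i]) = 1. Proof. by []. Qed.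
Lemma cext (x y : R[i]) : Re x = Re y -> Im x = Im y -> x = y.
Proof. by case: x y => a b [c d] /= -> ->. Qed.
Lemma conjcD (x y : R[i]) : conjc (x + y) = conjc x + conjc y.
Proof. by apply: cext; rewrite !(cReD, cImD, cReJ, cImJ) // opprD. Qed.
Lemma conjcM (x y : R[i]) : conjc (x * y) = conjc x * conjc y.
Proof. apply: cext; rewrite !(cReM, cImM, cReJ, cImJ); ring. Qed.
Lemma conjcN (x : R[i]) : conjc (- x) = - conjc x.
Proof. by apply: cext; rewrite !(cReN, cImN, cReJ, cImJ). Qed.
Lemma conjcB (x y : R[i]) : conjc (x - y) = conjc x - conjc y.
Proof. by rewrite conjcD conjcN. Qed.
Lemma conjcKK (x : R[i]) : conjc (conjc x) = x.
Proof. by case: x => a b /=; rewrite opprK. Qed.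
Lemma conjcC (r : R) : conjc (r%:C) = r%:C.
Proof. by apply: cext => //=; rewrite oppr0. Qed.
Lemma conjc00 : conjc (0 : R[i]) = 0.
Proof. by apply: cext => //=; rewrite oppr0. Qed.

Definition csq (z : R[i]) : R := Re z ^+ 2 + Im z ^+ 2.
Lemma csq_ge0 z : 0 <= csq z.
Proof. rewrite /csq; nra. Qed.
Lemma csq_eq0 z : csq z = 0 -> z = 0.
Proof. case: z => a b; rewrite /csq /= => h; apply: cext => /=; nra. Qed.
Lemma csqJ z : csq (conjc z) = csq z.
Proof. by rewrite /csq cReJ cImJ sqrrN. Qed.
Lemma csq0 : csq 0 = 0.
Proof. by rewrite /csq /= expr2 mulr0 addr0. Qed.
Lemma bnd_re (a b c e : R) : `|a * b - c * e| <= a ^+ 2 + c ^+ 2 + (b ^+ 2 + e ^+ 2).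
Proof.
have := sqr_ge0 (a - b); have := sqr_ge0 (c + e); have := sqr_ge0 (a + b);
have := sqr_ge0 (c - e); rewrite ler_norml; move=> *; apply/andP; split; nra.
Qed.
Lemma bnd_im (a b c e : R) : `|a * e + c * b| <= a ^+ 2 + c ^+ 2 + (b ^+ 2 + e ^+ 2).
Proof.
have := sqr_ge0 (a - e); have := sqr_ge0 (c - b); have := sqr_ge0 (a + e);
have := sqr_ge0 (c + b); rewrite ler_norml; move=> *; apply/andP; split; nra.
Qed.
Definition ci : R[i] := Complex 0 1.
Lemma cReci : Re ci = 0. Proof. by []. Qed.
Lemma cImci : Im ci = 1. Proof. by []. Qed.
End CplxFacts.
Arguments ci {R}.

Definition cE := (cReM, cImM, cReD, cImD, cReN, cImN, cReJ, cImJ, cReC, cImC, cRe0, cIm0, cRe1, cIm1, cRei, cImi, cReci, cImci).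
Section Hil.
Variables (R : realType) (H : lmodType R[i]) (ip : H -> H -> R[i]).
Hypothesis hip : is_inner_product ip.
Local Notation Re := complex.Re.
Local Notation Im := complex.Im.

Definition q (x : H) : R := Re (ip x x).

Lemma ipDZl a x y z : ip (a *: x + y) z = a * ip x z + ip y z.
Proof. by case: hip. Qed.
Lemma ipJ x y : ip y x = conjc (ip x y).
Proof. by case: hip. Qed.
Lemma ip0l z : ip 0 z = 0.
Proof.
have := ipDZl 1 0 0 z; rewrite scaler0 addr0 mul1r => h.
by apply/eqP; rewrite -(addrI _ (esym (etrans (addr0 _) h))).
Qed.
Lemma ipDl x y z : ip (x + y) z = ip x z + ip y z.
Proof. by rewrite -{1}(scale1r x) ipDZl mul1r. Qed.
Lemma ipZl a x z : ip (a *: x) z = a * ip x z.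
Proof. by rewrite -(addr0 (a *: x)) ipDZl ip0l addr0. Qed.
Lemma ipNl x z : ip (- x) z = - ip x z.
Proof. by rewrite -scaleN1r ipZl mulN1r. Qed.
Lemma ipBl x y z : ip (x - y) z = ip x z - ip y z.
Proof. by rewrite ipDl ipNl. Qed.
Lemma ip0r z : ip z 0 = 0.
Proof. by rewrite ipJ ip0l conjc00. Qed.
Lemma ipDr x y z : ip z (x + y) = ip z x + ip z y.
Proof. by rewrite ipJ ipDl conjcD -!ipJ. Qed.
Lemma ipZr a x z : ip z (a *: x) = conjc a * ip z x.
Proof. by rewrite ipJ ipZl conjcM -ipJ. Qed.
Lemma ipNr x z : ip z (- x) = - ip z x.
Proof. by rewrite ipJ ipNl conjcN -ipJ. Qed.
Lemma ipBr x y z : ip z (x - y) = ip z x - ip z y.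
Proof. by rewrite ipDr ipNr. Qed.

Lemma ImIp x : Im (ip x x) = 0.
Proof. by case: hip => _ _ /(_ x) []. Qed.
Lemma q_ge0 x : 0 <= q x.
Proof. by case: hip => _ _ /(_ x) []. Qed.
Lemma ipq x : ip x x = (q x)%:C.
Proof. by apply: cext => //; rewrite ImIp. Qed.
Lemma q_eq0 x : q x = 0 -> x = 0.
Proof. by move=> h; case: hip => _ _ _; apply; rewrite ipq h. Qed.
Lemma q0 : q 0 = 0.
Proof. by rewrite /q ip0l. Qed.
Lemma hnorm_sq x : hnorm ip x ^+ 2 = q x.
Proof. by rewrite /hnorm sqr_sqrtr // q_ge0. Qed.
Lemma hnorm_ge0 x : 0 <= hnorm ip x.
Proof. exact: sqrtr_ge0. Qed.
Lemma ip_ext y z : (forall x, ip x y = ip x z) -> y = z.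
Proof.
move=> h; apply/eqP; rewrite -subr_eq0; apply/eqP; apply: q_eq0.
by rewrite /q ipBr h subrr.
Qed.
Lemma ip_extl y z : (forall x, ip y x = ip z x) -> y = z.
Proof. by move=> h; apply: ip_ext => x; rewrite ipJ h -ipJ. Qed.

Lemma qD x y : q (x + y) = q x + q y + 2 * Re (ip x y).
Proof.
rewrite /q ipDl !ipDr (ipJ x y) !cE; ring.
Qed.
Lemma qB x y : q (x - y) = q x + q y - 2 * Re (ip x y).
Proof.
rewrite /q ipBl !ipBr (ipJ x y) !cE; ring.
Qed.
Lemma qZ a x : q (a *: x) = csq a * q x.
Proof. by rewrite /q ipZl ipZr ipq /csq !cE; ring. Qed.

Lemma CS x y : csq (ip x y) <= q x * q y.
Proof.
have [y0|yn0] := eqVneq (q y) 0.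
  by rewrite (q_eq0 y0) ip0r csq0 q0 mulr0.
have ny : 0 < q y by rewrite lt_def yn0 q_ge0.
set c := ip x y.
have := q_ge0 ((q y)%:C *: x - c *: y).
rewrite qB !qZ ipZl ipZr -/c /csq !cE => h.
have : 0 <= q y * (q x * q y - (Re c ^+ 2 + Im c ^+ 2)).
  by move: h; rewrite /q; set a := Re (ip x x); set b := Re (ip y y); nra.
by rewrite pmulr_rge0 // subr_ge0.
Qed.

Lemma adjoint_lin (A As : H -> H) : is_adjoint ip A As ->
  forall a f g, As (a *: f + g) = a *: As f + As g.
Proof.
move=> adj a f g; apply: ip_ext => x.
by rewrite -adj ipDr ipZr ipDr ipZr -!adj.
Qed.

End Hil.
Section Riesz.
Variables (R : realType) (H : lmodType R[i]) (ip : H -> H -> R[i]).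
Hypothesis hip : is_inner_product ip.
Local Notation Re := complex.Re.
Local Notation Im := complex.Im.
Local Notation q := (q ip).

Lemma hnorm_lt_q x e : hnorm ip x < e -> q x < e ^+ 2.
Proof.
move=> h; rewrite -hnorm_sq //; have := hnorm_ge0 ip x; nra.
Qed.
Lemma q_lt_hnorm x e : 0 < e -> q x < e ^+ 2 -> hnorm ip x < e.
Proof.
move=> e0; rewrite -hnorm_sq // => h; have := hnorm_ge0 ip x; nra.
Qed.

Lemma inv_small (e : R) : 0 < e -> exists N, forall n, (N <= n)%N -> n.+1%:R^-1 < e.
Proof.
move=> e0; have ie0 : 0 <= e^-1 by rewrite invr_ge0 ltW.
exists (Num.Def.archi_bound e^-1) => n hn.
rewrite -[e]invrK ltf_pV2 ?posrE ?invr_gt0 ?ltr0Sn //.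
apply: (lt_le_trans (archi_boundP ie0)); rewrite ler_nat; exact: leqW.
Qed.

Lemma conv_q u l : hconverges ip u l -> forall eps, 0 < eps ->
  exists N, forall n, (N <= n)%N -> q (u n - l) < eps.
Proof.
move=> hu eps e0; have e1 : 0 < Num.sqrt eps by rewrite sqrtr_gt0.
have [N hN] := hu _ e1.
exists N => n /hN /hnorm_lt_q; rewrite sqr_sqrtr //; exact: ltW.
Qed.

Lemma amgm a b s : 0 < s -> 2 * Re (ip a b) <= s * q a + q b / s.
Proof.
move=> s0; have := q_ge0 hip ((s%:C) *: a - b).
rewrite qB // qZ // ipZl // /csq !cE => h.
have hb : q b = (q b / s) * s by rewrite mulfVK // gt_eqF.
rewrite hb in h.
move: h; set t := q b / s; set r := Re (ip a b); set u := q a.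
rewrite /= => h.
have e0 : (0:R) ^+ 2 = 0 by rewrite expr2 mulr0.
rewrite e0 mul0r subr0 addr0 in h.
nra.
Qed.

Lemma riesz (hc : hcomplete ip) (phi : H -> R[i]) (C : R) :
  (forall a x y, phi (a *: x + y) = a * phi x + phi y) ->
  (forall x, csq (phi x) <= C * q x) ->
  exists y, forall x, phi x = ip x y.
Proof.
move=> lin bnd.
have phi0 : phi 0 = 0.
  have := lin 1 0 0; rewrite scaler0 addr0 mul1r => h.
  by apply/eqP; rewrite -(addrI _ (esym (etrans (addr0 _) h))).
have phiD x y : phi (x + y) = phi x + phi y by rewrite -{1}(scale1r x) lin mul1r.
have phiZ a x : phi (a *: x) = a * phi x by rewrite -(addr0 (a *: x)) lin phi0 addr0.
have phiB x y : phi (x - y) = phi x - phi y.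
  by rewrite phiD -scaleN1r phiZ mulN1r.
have [[z hz]|nz] := pselect (exists z, phi z != 0); last first.
  exists 0 => x; rewrite ip0r //; apply/eqP/negPn/negP => h; apply: nz.
  by exists x.
pose z1 := (phi z)^-1 *: z.
have hz1 : phi z1 = 1 by rewrite phiZ mulVf.
pose S := [set r | exists2 x, phi x = 1 & r = q x].
pose m := inf S.
have Sne : S !=set0 by exists (q z1); exists z1.
have Slb : has_lbound S by exists 0 => r [x _ ->]; exact: q_ge0.
have Sinf : has_inf S by split.
have m_le x : phi x = 1 -> m <= q x by move=> hx; apply: ge_inf => //; exists x.
have m_ge0 : 0 <= m by apply: lb_le_inf => // r [x _ ->]; exact: q_ge0.
have ex_u n : exists x, phi x = 1 /\ q x < m + n.+1%:R^-1.
  have hn : 0 < n.+1%:R^-1 :> R by rewrite invr_gt0 ltr0Sn.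
  have [r [x hx ->] hr] := inf_adherent hn Sinf.
  by exists x.
have [u hu] := choice ex_u.
have half x y : phi x = 1 -> phi y = 1 -> 4 * m <= q (x + y).
  move=> hx hy.
  have h1 : phi ((2^-1 : R)%:C *: (x + y)) = 1.
    by rewrite phiZ phiD hx hy; apply: cext; rewrite !cE; field.
  have := m_le _ h1; rewrite qZ // /csq !cE.
  have -> : (2^-1 : R) ^+ 2 + 0 ^+ 2 = 4^-1 by field.
  have q0' := q_ge0 hip (x + y).
  move=> h; have := ler_wpM2l (_ : 0 <= 4) h; rewrite mulrA mulfV ?mul1r //.
  by apply; lra.
have cauchy : hcauchy ip u.
  move=> e e0; have e2 : 0 < e ^+ 2 / 4 by rewrite divr_gt0 // exprn_gt0.
  have [N hN] := inv_small e2.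
  exists N => p n hp hn; apply: q_lt_hnorm => //.
  have par : q (u p - u n) = 2 * q (u p) + 2 * q (u n) - q (u p + u n).
    by rewrite qB // qD //; ring.
  have := half _ _ (hu p).1 (hu n).1; have := (hu p).2; have := (hu n).2.
  have ht : 4 * (e ^+ 2 / 4) = e ^+ 2 by rewrite mulrC divfK // pnatr_eq0.
  move: ht; set t := e ^+ 2 / 4 => ht.
  have := hN p hp; have := hN n hn; rewrite par -/t; clearbody t.
  set a := n.+1%:R^-1; set b := p.+1%:R^-1; clearbody a b; lra.
have [x0 hx0] := hc u cauchy.
have qN x : q (- x) = q x by rewrite /q ipNl // ipNr // opprK.
have hphi : phi x0 = 1.
  have key eps : 0 < eps -> csq (1 - phi x0) < eps.
    move=> e0; set c1 := `|C| + 1.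
    have c10 : 0 < c1 by rewrite /c1 ltr_wpDl.
    have ec : 0 < eps / c1 by rewrite divr_gt0.
    have [N hN] := conv_q hx0 ec.
    have hN' := hN N (leqnn N).
    have -> : 1 - phi x0 = phi (u N - x0) by rewrite phiB (hu N).1.
    apply: (le_lt_trans (bnd _)).
    have hC : C <= `|C| := ler_norm C.
    have qq := q_ge0 hip (u N - x0).
    have : c1 * q (u N - x0) < c1 * (eps / c1) by rewrite ltr_pM2l.
    rewrite [c1 * (eps / c1)]mulrC divfK ?gt_eqF // => h.
    rewrite /c1 in h; nra.
  have : csq (1 - phi x0) = 0.
    apply/eqP; rewrite eq_le csq_ge0 andbT; apply/negPn/negP; rewrite -ltNge => h.
    by have := key _ h; rewrite ltxx.
  by move/csq_eq0/eqP; rewrite subr_eq0 => /eqP <-.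
have qx0 : q x0 <= m.
  apply/negPn/negP; rewrite -ltNge => hlt.
  set dl := q x0 - m.
  have dl0 : 0 < dl by rewrite subr_gt0.
  set s := dl / (3 * (m + 1)).
  have m10 : 0 < m + 1 by rewrite ltr_wpDl.
  have s0 : 0 < s by rewrite divr_gt0 // mulr_gt0.
  have hs : s * (m + 1) = dl / 3 by rewrite /s; field; rewrite gt_eqF.
  have d30 : 0 < dl / 3 by rewrite divr_gt0.
  have [N1 hN1] := inv_small d30.
  have is0 : 0 < 1 + s^-1 by rewrite ltr_wpDr ?invr_ge0 ?ltW.
  have ec : 0 < dl / 3 / (1 + s^-1) by rewrite divr_gt0.
  have [N2 hN2] := conv_q hx0 ec.
  set n := maxn N1 N2.
  have a1 := hN1 n (leq_maxl _ _).
  have a2 := hN2 n (leq_maxr _ _).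
  have a3 := (hu n).2.
  have am := amgm (u n) (x0 - u n) s0.
  have i0 : 0 <= n.+1%:R^-1 :> R by rewrite invr_ge0.
  have i1 : n.+1%:R^-1 <= 1 :> R by rewrite invf_le1 ?ltr0Sn // ler1n.
  have eqx : q x0 = q (u n) + q (x0 - u n) + 2 * Re (ip (u n) (x0 - u n)).
    by rewrite -qD // addrC subrK.
  have qb : q (x0 - u n) = q (u n - x0) by rewrite -opprB qN.
  have b1 : q (u n - x0) * (1 + s^-1) < dl / 3.
    by move: a2; rewrite ltr_pdivlMr.
  have b2 : s * q (u n) <= s * (m + 1).
    by rewrite ler_pM2l //; apply: ltW; apply: (lt_le_trans a3); rewrite lerD2l.
  have b3 : q (u n - x0) + q (u n - x0) / s = q (u n - x0) * (1 + s^-1) by ring.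
  rewrite qb in eqx am.
  have : q x0 < q x0.
    rewrite {1}eqx.
    move: am b1 b2 b3 hs a1 a3 i1; rewrite /dl.
    set a := n.+1%:R^-1; clearbody a; lra.
  by rewrite ltxx.
have orth k : phi k = 0 -> ip x0 k = 0.
  move=> hk; set c := ip x0 k; set s := (q k + 1)^-1.
  have qk0 := q_ge0 hip k.
  have k10 : 0 < q k + 1 by rewrite ltr_wpDl.
  have s0 : 0 < s by rewrite invr_gt0.
  have hs : s * q k + s = 1 by rewrite -[X in _ + X]mulr1 -mulrDr mulVf // gt_eqF.
  have hA : phi (x0 - (s%:C * c) *: k) = 1 by rewrite phiB phiZ hk mulr0 subr0.
  have := le_trans qx0 (m_le _ hA); rewrite qB // qZ // ipZr // -/c.
  have -> : csq (s%:C * c) = s ^+ 2 * csq c by rewrite /csq !cE; ring.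
  have -> : Re (conjc (s%:C * c) * c) = s * csq c by rewrite /csq !cE; ring.
  move=> h.
  have X0 := csq_ge0 c.
  have : s * csq c * (s * q k + s) <= 0.
    move: h; set X := csq c; nra.
  rewrite hs mulr1 pmulr_rle0 // => hX.
  by apply: csq_eq0; apply/eqP; rewrite eq_le hX X0.
have x0n : q x0 != 0.
  apply/eqP => /(q_eq0 hip) h0; move: hphi; rewrite h0 phi0 => /eqP.
  by rewrite eq_sym oner_eq0.
exists ((q x0)^-1%:C *: x0) => x.
have hk : phi (x - phi x *: x0) = 0 by rewrite phiB phiZ hphi mulr1 subrr.
have := orth _ hk; rewrite ipBr // ipZr // (ipq hip x0) => /eqP; rewrite subr_eq0 => /eqP h.
rewrite ipZr // conjcC (ipJ hip x0 x) h.
by apply: cext; rewrite !cE; field; exact: x0n.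
Qed.
End Riesz.

Lemma exists_adjoint (R : realType) (H : lmodType R[i]) (ip : H -> H -> R[i]) :
  is_inner_product ip -> hcomplete ip ->
  forall A : H -> H, bounded_op ip A -> exists As, is_adjoint ip A As.
Proof.
move=> hip hc A [lin [M hM]].
have ex h : exists y, forall x, ip (A x) h = ip x y.
  apply: (riesz hip hc (C := M ^+ 2 * q ip h)).
    by move=> a x y; rewrite lin ipDl // ipZl.
  move=> x; apply: (le_trans (CS hip _ _)).
  have h1 : q ip (A x) <= M ^+ 2 * q ip x.
    rewrite -!(hnorm_sq hip); have := hM x; have := hnorm_ge0 ip (A x).
    have := hnorm_ge0 ip x; nra.
  have := q_ge0 hip h; have := q_ge0 hip x; have := q_ge0 hip (A x); nra.
have [As hAs] := choice ex.
by exists As => x y; rewrite hAs.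
Qed.

Section Meas.
Context {d : measure_display} {T : measurableType d} {R : realType}.
Variable mu : {measure set T -> \bar R}.
Local Notation Re := complex.Re.
Local Notation Im := complex.Im.

Lemma cmeas_mul (f g : T -> R[i]) : cmeasurable f -> cmeasurable g ->
  cmeasurable (fun w => f w * g w).
Proof.
move=> [f1 f2] [g1 g2]; split.
  rewrite (_ : (fun w => _) = (fun w => Re (f w) * Re (g w) - Im (f w) * Im (g w))); last first.
    by apply: funext => w; rewrite cReM.
  by apply: measurable_funB; apply: measurable_funM.
rewrite (_ : (fun w => _) = (fun w => Re (f w) * Im (g w) + Im (f w) * Re (g w))); last first.
  by apply: funext => w; rewrite cImM.
by apply: measurable_funD; apply: measurable_funM.
Qed.

Lemma cmeas_add (f g : T -> R[i]) : cmeasurable f -> cmeasurable g ->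
  cmeasurable (fun w => f w + g w).
Proof.
move=> [f1 f2] [g1 g2]; split.
  rewrite (_ : (fun w => _) = (fun w => Re (f w) + Re (g w))); last first.
    by apply: funext => w; rewrite cReD.
  exact: measurable_funD.
rewrite (_ : (fun w => _) = (fun w => Im (f w) + Im (g w))); last first.
  by apply: funext => w; rewrite cImD.
exact: measurable_funD.
Qed.

Lemma cmeas_opp (f : T -> R[i]) : cmeasurable f -> cmeasurable (fun w => - f w).
Proof.
move=> [f1 f2]; split.
  rewrite (_ : (fun w => _) = (fun w => - Re (f w))); last first.
    by apply: funext => w; rewrite cReN.
  exact: measurable_funN.
rewrite (_ : (fun w => _) = (fun w => - Im (f w))); last first.
  by apply: funext => w; rewrite cImN.
exact: measurable_funN.
Qed.

Lemma cmeas_sub (f g : T -> R[i]) : cmeasurable f -> cmeasurable g ->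
  cmeasurable (fun w => f w - g w).
Proof. by move=> hf hg; apply: cmeas_add => //; exact: cmeas_opp. Qed.

Lemma cmeas_conj (f : T -> R[i]) : cmeasurable f -> cmeasurable (fun w => conjc (f w)).
Proof.
move=> [f1 f2]; split.
  rewrite (_ : (fun w => _) = (fun w => Re (f w))) //.
  by apply: funext => w; rewrite cReJ.
rewrite (_ : (fun w => _) = (fun w => - Im (f w))); last first.
  by apply: funext => w; rewrite cImJ.
exact: measurable_funN.
Qed.

Lemma meas_csq (f : T -> R[i]) : cmeasurable f -> measurable_fun setT (fun w => csq (f w)).
Proof.
move=> [f1 f2]; rewrite /csq.
by apply: measurable_funD; apply: measurable_funX.
Qed.

Lemma L2_int (f : T -> R[i]) : L2c mu f ->
  mu.-integrable setT (EFin \o (fun w => csq (f w))).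
Proof.
move=> [mf fin]; apply/integrableP; split.
  by apply/measurable_EFinP; exact: meas_csq.
rewrite (eq_integral (fun w => (csq (f w))%:E)).
  exact: fin.
by move=> w _; rewrite /comp abse_EFin ger0_norm // csq_ge0.
Qed.

Definition cint (f : T -> R[i]) : Prop :=
  mu.-integrable setT (EFin \o (fun w => Re (f w))) /\
  mu.-integrable setT (EFin \o (fun w => Im (f w))).

Lemma L2_prod_int (f g : T -> R[i]) : L2c mu f -> L2c mu g -> cint (fun w => f w * g w).
Proof.
move=> hf hg; have [mf _] := hf; have [mg _] := hg.
have [m1 m2] := cmeas_mul mf mg.
have iD := integrableD measurableT (L2_int hf) (L2_int hg).
split; (apply: le_integrable iD => //; first exact/measurable_EFinP); move=> w _;
  rewrite /comp !abse_EFin lee_fin [X in _ <= X]ger0_norm ?(addr_ge0, csq_ge0, sqr_ge0) // /csq ?cReM ?cImM;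
  [exact: bnd_re | exact: bnd_im].
Qed.

Lemma L2_conj (f : T -> R[i]) : L2c mu f -> L2c mu (fun w => conjc (f w)).
Proof.
move=> [mf fin]; split; first exact: cmeas_conj.
by rewrite /csq_integral; under eq_integral do rewrite cReJ cImJ sqrrN.
Qed.

Lemma cintD (f g : T -> R[i]) : cint f -> cint g ->
  cintegral mu (fun w => f w + g w) = cintegral mu f + cintegral mu g.
Proof.
move=> [f1 f2] [g1 g2]; rewrite /cintegral; apply: cext; rewrite ?cReD ?cImD /=.
  by under eq_Rintegral do rewrite cReD; rewrite RintegralD.
by under eq_Rintegral do rewrite cImD; rewrite RintegralD.
Qed.

Lemma cintB (f g : T -> R[i]) : cint f -> cint g ->
  cintegral mu (fun w => f w - g w) = cintegral mu f - cintegral mu g.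
Proof.
move=> [f1 f2] [g1 g2]; rewrite /cintegral; apply: cext; rewrite ?cReB ?cImB /=.
  by under eq_Rintegral do rewrite cReB; rewrite RintegralB.
by under eq_Rintegral do rewrite cImB; rewrite RintegralB.
Qed.

Lemma cint_ae (f g : T -> R[i]) : cmeasurable f -> cmeasurable g ->
  {ae mu, forall w, f w = g w} -> cintegral mu f = cintegral mu g.
Proof.
move=> [f1 f2] [g1 g2] hfg; rewrite /cintegral /Rintegral.
congr (Complex (fine _) (fine _)); apply: ae_eq_integral => //;
  try (by apply/measurable_EFinP);
  by apply: filterS hfg => w /= ->.
Qed.

Lemma csq_int0 (f : T -> R[i]) : cmeasurable f -> csq_integral mu f = 0%E ->
  {ae mu, forall w, f w = 0}.
Proof.
move=> mf h.
have : ae_eq mu setT (fun w => (csq (f w))%:E) (cst 0%E).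
  apply/ae_eq_integral_abs => //; first by apply/measurable_EFinP; exact: meas_csq.
  rewrite -h /csq_integral; apply: eq_integral => w _.
  by rewrite abse_EFin ger0_norm // csq_ge0.
by apply: filterS => w /(_ I) [] /csq_eq0.
Qed.

Lemma cint_ext (f g : T -> R[i]) : (forall w, f w = g w) -> cintegral mu f = cintegral mu g.
Proof. by move=> h; congr cintegral; apply: funext. Qed.

Lemma cint_sub (f g : T -> R[i]) : cint f -> cint g -> cint (fun w => f w - g w).
Proof.
move=> [f1 f2] [g1 g2]; split.
  apply: (eq_integrable measurableT _ _ _ (integrableB measurableT f1 g1)).
  by move=> w _; rewrite /= cReB EFinB.
apply: (eq_integrable measurableT _ _ _ (integrableB measurableT f2 g2)).
by move=> w _; rewrite /= cImB EFinB.
Qed.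

Lemma L2_Rint (a : T -> R[i]) : L2c mu a ->
  csq_integral mu a = (Rintegral mu setT (fun w => csq (a w)))%:E.
Proof.
move=> ha; rewrite /Rintegral fineK //.
exact: (integrable_fin_num measurableT (L2_int ha)).
Qed.

Lemma csq3 (x y z : R[i]) : csq (x + (y - z)) <= 3 * csq x + 3 * csq y + 3 * csq z.
Proof.
rewrite /csq !cE.
have := sqr_ge0 (Re x - Re y); have := sqr_ge0 (Re y + Re z); have := sqr_ge0 (Re x + Re z).
have := sqr_ge0 (Im x - Im y); have := sqr_ge0 (Im y + Im z); have := sqr_ge0 (Im x + Im z).
nra.
Qed.

Lemma bessel3 (a b c : T -> R[i]) (x1 x2 x3 : R) : L2c mu a -> L2c mu b -> L2c mu c ->
  (csq_integral mu a <= x1%:E)%E -> (csq_integral mu b <= x2%:E)%E ->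
  (csq_integral mu c <= x3%:E)%E ->
  (csq_integral mu (fun w => (a w + (b w - c w))%R) <= (3 * (x1 + x2 + x3))%R%:E)%E.
Proof.
move=> ha hb hc h1 h2 h3.
have ia := L2_int ha; have ib := L2_int hb; have ic := L2_int hc.
have iZ u : mu.-integrable setT (EFin \o (fun w => csq (u w))) ->
    mu.-integrable setT (EFin \o (fun w => 3 * csq (u w))).
  move=> iu; apply: (eq_integrable measurableT _ _ _ (integrableZl measurableT 3 iu)).
  by move=> w _; rewrite /= EFinM.
have iZa := iZ _ ia; have iZb := iZ _ ib; have iZc := iZ _ ic.
have iAB : mu.-integrable setT
    (EFin \o (fun w => 3 * csq (a w) + 3 * csq (b w))).
  apply: (eq_integrable measurableT _ _ _ (integrableD measurableT iZa iZb)).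
  by move=> w _; rewrite /= !EFinD.
have iS : mu.-integrable setT
    (EFin \o (fun w => 3 * csq (a w) + 3 * csq (b w) + 3 * csq (c w))).
  apply: (eq_integrable measurableT _ _ _ (integrableD measurableT iAB iZc)).
  by move=> w _; rewrite /= !EFinD.
have [ma _] := ha; have [mb _] := hb; have [mc _] := hc.
apply: (le_trans (ge0_le_integral mu measurableT
  (f2 := EFin \o (fun w => 3 * csq (a w) + 3 * csq (b w) + 3 * csq (c w))) _ _ _ _)).
- by move=> w _; rewrite lee_fin; exact: (csq_ge0 (a w + (b w - c w))).
- apply/measurable_EFinP; apply: (meas_csq (f := fun w => a w + (b w - c w))).
  by apply: cmeas_add => //; apply: cmeas_sub.
- exact: (measurable_int mu iS).
- by move=> w _; rewrite lee_fin; exact: csq3.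
rewrite -(fineK (integrable_fin_num measurableT iS)) lee_fin.
rewrite (_ : fine _ = Rintegral mu setT
   (fun w => 3 * csq (a w) + 3 * csq (b w) + 3 * csq (c w))) //.
rewrite RintegralD // RintegralD // !RintegralZl //.
move: h1 h2 h3; rewrite (L2_Rint ha) (L2_Rint hb) (L2_Rint hc) !lee_fin => h1 h2 h3.
lra.
Qed.

End Meas.

Local Close Scope complex_scope.
Unset Implicit Arguments.

Theorem theorem3p8 (R : realType) (H : lmodType R[i]) (ip : H -> H -> R[i])
  (d : measure_display) (T : measurableType d) (mu : {measure set T -> \bar R})
  (K Ks Kd : H -> H) (F : T -> H) :
  separable_hilbert_space ip ->
  bounded_op ip K -> closed_range ip K ->
  is_adjoint ip K Ks ->
  is_MP_inverse ip K Kd ->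
  parseval_cont_Kframe mu ip Ks F ->
  (cont_L2_independent mu ip F <-> cont_L2_independent mu ip (fun w => Kd (F w))) /\
  (unique_dual_cont_bessel mu ip K F ->
   unique_dual_cont_bessel mu ip Ks (fun w => Kd (F w))).
Proof.
move=> [hip hc _] Kb _ adjK [Kdb KdK1 KdK2 sa1 sa2] [wmF parF].
have [Kds adjKd] := exists_adjoint hip hc Kdb.
have qKs f : csq_integral mu (fun w => ip f (F w)) = (q ip (Ks f))%:E.
  by rewrite parF (hnorm_sq hip).
have L2F f : L2c mu (fun w => ip f (F w)).
  by split; [exact: wmF | rewrite qKs ltry].
have L2Fr g : L2c mu (fun w => ip (F w) g).
  rewrite (_ : (fun w => _) = fun w => conjc (ip g (F w))); first exact: L2_conj.
  by apply: funext => w; rewrite (ipJ hip).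
have cmF g : cmeasurable (fun w => ip (F w) g) by case: (L2Fr g).
have KdF w h : ip (Kd (F w)) h = ip (F w) (Kds h) by rewrite adjKd.
have O1 g : K (Kd g) = Kds (Ks g).
  apply: (ip_ext hip) => x; rewrite -adjKd -adjK.
  by have := sa1 x g; rewrite /= => ->.
have O2 g : {ae mu, forall w, ip (F w) (g - K (Kd g)) = 0}.
  have hK : Ks (g - K (Kd g)) = 0.
    apply: (ip_ext hip) => x; rewrite -adjK (ipBr hip) (ip0r hip).
    by have := sa1 (K x) g; rewrite /= KdK1 => ->; rewrite subrr.
  have : csq_integral mu (fun w => ip (g - K (Kd g)) (F w)) = 0%E.
    by rewrite qKs hK (q0 hip).
  move/(csq_int0 (wmF _)); apply: filterS => w hw.
  by rewrite (ipJ hip) hw conjc00.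
have O3 y : Kd (K (Ks y)) = Ks y.
  apply: (ip_ext hip) => x.
  have := sa2 x (Ks y); rewrite /= => <-.
  by rewrite -!adjK KdK1.
have swap a h : cmeasurable a ->
    cintegral mu (fun w => a w * ip (F w) h) =
    cintegral mu (fun w => a w * ip (Kd (F w)) (Ks h)).
  move=> ma; apply: cint_ae.
  - exact: cmeas_mul.
  - rewrite (_ : (fun w => _) = fun w => a w * ip (F w) (Kds (Ks h))).
      exact: cmeas_mul.
    by apply: funext => w; rewrite KdF.
  - apply: filterS (O2 h) => w hw.
    rewrite KdF -O1; congr (_ * _).
    by move: hw; rewrite (ipBr hip) => /eqP; rewrite subr_eq0 => /eqP.
split.
  split.
  - move=> indF phi hphi hint; apply: indF => // g.
    by rewrite swap; [exact: hint | case: hphi].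
  - move=> indKF phi hphi hint; apply: indKF => // h.
    rewrite (@cint_ext _ _ _ _ _ (fun w => phi w * ip (F w) (Kds h))) ?hint //.
    by move=> w /=; rewrite KdF.
have KsD f g : Ks (f + g) = Ks f + Ks g.
  by rewrite -{1}(scale1r f) (adjoint_lin hip adjK) scale1r.
have KsB f g : Ks (f - g) = Ks f - Ks g.
  by rewrite addrC -scaleN1r (adjoint_lin hip adjK) scaleN1r addrC.
have KsZ a f g : Ks (f + a *: g) = Ks f + a *: Ks g.
  by rewrite addrC (adjoint_lin hip adjK) addrC.
have RqKs p : Rintegral mu setT (fun w => csq (ip p (F w))) = q ip (Ks p).
  by rewrite /Rintegral; move: (qKs p); rewrite /csq_integral /csq => ->.
have iF p : mu.-integrable setT (EFin \o (fun w => csq (ip p (F w)))) := L2_int (L2F p).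
have iFZ p : mu.-integrable setT (EFin \o (fun w => 4^-1 * csq (ip p (F w)))).
  apply: (eq_integrable measurableT _ _ _ (integrableZl measurableT (4^-1) (iF p))).
  by move=> w _; rewrite /= EFinM.
have P f g : cintegral mu (fun w => ip f (F w) * ip (F w) g) = ip (Ks f) (Ks g).
  apply: cext; rewrite /cintegral /=.
  - rewrite (@eq_Rintegral _ _ _ mu setT (fun w => 4^-1 * csq (ip (f + g) (F w)) -
        4^-1 * csq (ip (f - g) (F w)))); last first.
      by move=> w _; rewrite (ipJ hip g (F w)) (ipDl hip) (ipBl hip) /csq !cE; field.
    rewrite (RintegralB measurableT (iFZ (f + g)) (iFZ (f - g))).
    by rewrite !RintegralZl ?iF // !RqKs KsD KsB (qD hip) (qB hip); field.
  - rewrite (@eq_Rintegral _ _ _ mu setT (fun w => 4^-1 * csq (ip (f + ci *: g) (F w)) -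
        4^-1 * csq (ip (f - ci *: g) (F w)))); last first.
      by move=> w _; rewrite (ipJ hip g (F w)) (ipDl hip) (ipBl hip) !(ipZl hip) /csq !cE; field.
    rewrite (RintegralB measurableT (iFZ (f + ci *: g)) (iFZ (f - ci *: g))).
    rewrite !RintegralZl ?iF // !RqKs (KsZ ci f g) -(scaleNr ci g) (KsZ (- ci) f g) scaleNr.
    by rewrite (qD hip) (qB hip) !(qZ hip) !(ipZr hip) /csq !cE; field.
move=> [[G hG] uniqF]; split.
  exists F; split.
    split; first exact: wmF.
    have [_ [M hM]] := Kb.
    exists (M ^+ 2 + 1); split; first by rewrite ltr_wpDl ?sqr_ge0.
    move=> f; rewrite qKs (hnorm_sq hip) lee_fin.
    have h1 := CS hip (K (Ks f)) f.
    rewrite adjK (ipq hip) /csq !cE in h1.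
    have h2 : q ip (K (Ks f)) <= M ^+ 2 * q ip (Ks f).
      rewrite -!(hnorm_sq hip); have := hM (Ks f); have := hnorm_ge0 ip (K (Ks f)).
      have := hnorm_ge0 ip (Ks f); nra.
    have := q_ge0 hip f; have := q_ge0 hip (Ks f); have := q_ge0 hip (K (Ks f)).
    move: h1 h2; set a := q ip (Ks f); set b := q ip (K (Ks f)); set c := q ip f.
    have e0 : (0:R) ^+ 2 = 0 by rewrite expr2 mulr0.
    rewrite e0 addr0 => h1 h2 h3 h4 h5.
    have h6 : a ^+ 2 <= M ^+ 2 * a * c.
      apply: (le_trans h1); rewrite -mulrA [M ^+ 2 * (a * c)]mulrA.
      by apply: ler_wpM2r.
    rewrite leNgt; apply/negP => hlt.
    have hc0 : 0 <= (M ^+ 2 + 1) * c by have := sqr_ge0 M; nra.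
    have a0 : 0 < a by apply: le_lt_trans hlt.
    have : a * ((M ^+ 2 + 1) * c) < a * a by rewrite ltr_pM2l.
    have ac := mulr_ge0 h4 h5.
    rewrite -expr2; nra.
  move=> f h.
  rewrite (@cint_ext _ _ _ _ _ (fun w => ip f (F w) * ip (F w) (Kds h))); last first.
    by move=> w; rewrite KdF.
  by rewrite P -adjK -adjKd O3.
move=> G1 G2 [bG1 dG1] [bG2 dG2].
have [[wG [B [B0 hB]]] dG] := hG.
have [wG1 [B1 [B10 hB1]]] := bG1.
have [wG2 [B2 [B20 hB2]]] := bG2.
pose G' w := G w + (G1 w - G2 w).
have ipG' f w : ip f (G' w) = ip f (G w) + (ip f (G1 w) - ip f (G2 w)).
  by rewrite /G' (ipDr hip) (ipBr hip).
have L2G f : L2c mu (fun w => ip f (G w)).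
  by split; [exact: wG | apply: (le_lt_trans (hB f)); rewrite ltry].
have L2G1 f : L2c mu (fun w => ip f (G1 w)).
  by split; [exact: wG1 | apply: (le_lt_trans (hB1 f)); rewrite ltry].
have L2G2 f : L2c mu (fun w => ip f (G2 w)).
  by split; [exact: wG2 | apply: (le_lt_trans (hB2 f)); rewrite ltry].
have key f h (G0 : T -> H) : dual_cont_bessel mu ip Ks (fun w => Kd (F w)) G0 ->
    cintegral mu (fun w => ip f (G0 w) * ip (F w) h) = ip (Ks f) (Ks h).
  move=> [[wG0 _] dG0].
  by rewrite swap // dG0.
have hG' : dual_cont_bessel mu ip K F G'.
  split.
    split.
      move=> f; rewrite (_ : (fun w => _) = fun w => ip f (G w) + (ip f (G1 w) - ip f (G2 w))).
        by apply: cmeas_add; [|apply: cmeas_sub].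
      by apply: funext => w; rewrite ipG'.
    exists (3 * (B + B1 + B2)); split.
      by rewrite mulr_gt0 // addr_gt0 // addr_gt0.
    move=> f.
    rewrite (_ : (fun w => ip f (G' w)) =
       fun w => ip f (G w) + (ip f (G1 w) - ip f (G2 w))); last first.
      by apply: funext => w; rewrite ipG'.
    rewrite (_ : 3 * (B + B1 + B2) * hnorm ip f ^+ 2 = 3 * (B * hnorm ip f ^+ 2 +
       B1 * hnorm ip f ^+ 2 + B2 * hnorm ip f ^+ 2)); last by ring.
    exact: bessel3.
  move=> f h.
  rewrite (@cint_ext _ _ _ _ _ (fun w => ip f (G w) * ip (F w) h +
      (ip f (G1 w) * ip (F w) h - ip f (G2 w) * ip (F w) h))); last first.
    by move=> w; rewrite ipG'; ring.
  rewrite cintD; [| exact: L2_prod_int | ].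
    rewrite cintB; [| exact: L2_prod_int | exact: L2_prod_int].
    by rewrite (key _ _ _ (conj bG1 dG1)) (key _ _ _ (conj bG2 dG2)) subrr addr0 dG.
  by apply: cint_sub; apply: L2_prod_int.
have := uniqF _ _ hG hG'.
apply: filterS => w e.
move: e; rewrite /G' => e.
apply/eqP; rewrite -subr_eq0; apply/eqP; apply: (@addrI _ (G w)).
by rewrite addr0 -e.
Qed.
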